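(* Let $\psi(\bm{x},\bm{y})$ be a quantifier-free Presburger formula where $\bm{x}$ is a vector of $n$ variables and $\bm{y}$ a vector of $m$ variables, and let $\varphi$ be the sentence $\forall\bm{x}\,\exists\bm{y}\colon\psi(\bm{x},\bm{y})$. Let $\kappa(\bm{x},z_1,z_2)$ be the existential formula $\exists\bm{y}\colon\psi(\bm{x},\bm{y})\vee z_1=z_2$, with free variables $\bm{x},z_1,z_2$. Then $\kappa$ is monadically decomposable if and only if $\varphi$ is true.
   Context: Presburger formulas are over $\langle\mathbb{Z};+,<,(\equiv_m)_m,0,1\rangle$ with atoms $\sum a_ix_i\le b$ and $\sum a_ix_i\equiv b\pmod m$; quantifier-free formulas are Boolean combinations of atoms. A Presburger formula is monadic if each of its atoms contains at most one variable; a formula is monadically decomposable if it is equivalent over $\mathbb{Z}$ to a monadic Presburger formula. *)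

(* Defs.v *)
From Stdlib Require Import ZArith List.
Import ListNotations.
Open Scope Z_scope.

Definition lterm := list (Z * nat).

Definition eval_lterm (env : nat -> Z) (t : lterm) : Z :=
  fold_right (fun p acc => fst p * env (snd p) + acc) 0 t.

Inductive atom : Type :=
| ALe (t : lterm) (b : Z)
| ACong (t : lterm) (b : Z) (m : Z).

Definition atom_vars (a : atom) : list nat :=
  match a with ALe t _ => map snd t | ACong t _ _ => map snd t end.

Definition sat_atom (env : nat -> Z) (a : atom) : Prop :=
  match a with
  | ALe t b => eval_lterm env t <= b
  | ACong t b m => (m | eval_lterm env t - b)%Z
  end.

Inductive formula : Type :=
| FAtom (a : atom)
| FNot (f : formula)
| FAnd (f g : formula)
| FOr (f g : formula)
| FEx (v : nat) (f : formula)
| FAll (v : nat) (f : formula).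

Definition upd (env : nat -> Z) (v : nat) (z : Z) : nat -> Z :=
  fun w => if Nat.eqb w v then z else env w.

Fixpoint sat (env : nat -> Z) (f : formula) : Prop :=
  match f with
  | FAtom a => sat_atom env a
  | FNot f => ~ sat env f
  | FAnd f g => sat env f /\ sat env g
  | FOr f g => sat env f \/ sat env g
  | FEx v f => exists z : Z, sat (upd env v z) f
  | FAll v f => forall z : Z, sat (upd env v z) f
  end.

Fixpoint qfree (f : formula) : Prop :=
  match f with
  | FAtom _ => True
  | FNot f => qfree f
  | FAnd f g | FOr f g => qfree f /\ qfree g
  | FEx _ _ | FAll _ _ => False
  end.

Fixpoint free_vars (f : formula) : list nat :=
  match f with
  | FAtom a => atom_vars a
  | FNot f => free_vars f
  | FAnd f g | FOr f g => free_vars f ++ free_vars g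
  | FEx v f | FAll v f => filter (fun w => negb (Nat.eqb w v)) (free_vars f)
  end.

Definition monadic_atom (a : atom) : Prop :=
  forall v w, In v (atom_vars a) -> In w (atom_vars a) -> v = w.

Fixpoint monadic (f : formula) : Prop :=
  match f with
  | FAtom a => monadic_atom a
  | FNot f => monadic f
  | FAnd f g | FOr f g => monadic f /\ monadic g
  | FEx _ f | FAll _ f => monadic f
  end.

Definition equiv (f g : formula) : Prop := forall env, sat env f <-> sat env g.

Definition monadically_decomposable (f : formula) : Prop :=
  exists g, monadic g /\ equiv f g.

Definition ex_block (vs : list nat) (f : formula) : formula := fold_right FEx f vs.
Definition all_block (vs : list nat) (f : formula) : formula := fold_right FAll f vs.

(* Variable convention: x = variables 0..n-1, y = n..n+m-1,
   z1 = n+m, z2 = n+m+1. *)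
Definition xvars (n : nat) : list nat := seq 0 n.
Definition yvars (n m : nat) : list nat := seq n m.

Definition eq_formula (u v : nat) : formula :=
  FAnd (FAtom (ALe [(1, u); (-1, v)] 0)) (FAtom (ALe [(1, v); (-1, u)] 0)).

Definition phi_sentence (n m : nat) (psi : formula) : formula :=
  all_block (xvars n) (ex_block (yvars n m) psi).

Definition kappa (n m : nat) (psi : formula) : formula :=
  FOr (ex_block (yvars n m) psi) (eq_formula (n + m)%nat (n + m + 1)%nat).

(* Main.v *)
Require Import Defs.
From Stdlib Require Import ZArith List Lia Classical.
Import ListNotations.
Open Scope Z_scope.

Lemma eval_ext e1 e2 t : (forall v, In v (map snd t) -> e1 v = e2 v) ->
  eval_lterm e1 t = eval_lterm e2 t.
Proof.
  induction t as [|[a v] t IH]; simpl; intros H; auto.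
  rewrite (H v) by auto. rewrite IH; auto.
Qed.

Lemma sat_ext f : forall e1 e2, (forall v, In v (free_vars f) -> e1 v = e2 v) ->
  (sat e1 f <-> sat e2 f).
Proof.
  induction f; simpl; intros e1 e2 H.
  - destruct a; simpl in *; rewrite (eval_ext e1 e2) by auto; tauto.
  - rewrite (IHf e1 e2) by auto; tauto.
  - rewrite (IHf1 e1 e2), (IHf2 e1 e2) by (intros; apply H; apply in_or_app; auto); tauto.
  - rewrite (IHf1 e1 e2), (IHf2 e1 e2) by (intros; apply H; apply in_or_app; auto); tauto.
  - assert (Hu : forall z w, In w (free_vars f) -> upd e1 v z w = upd e2 v z w).
    { intros z w Hw; unfold upd; destruct (Nat.eqb_spec w v); auto. apply H.
      apply filter_In; split; auto; apply Bool.negb_true_iff, Nat.eqb_neq; auto. }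
    split; intros [z Hz]; exists z; [rewrite <- (IHf _ _ (Hu z)) | rewrite (IHf _ _ (Hu z))]; auto.
  - assert (Hu : forall z w, In w (free_vars f) -> upd e1 v z w = upd e2 v z w).
    { intros z w Hw; unfold upd; destruct (Nat.eqb_spec w v); auto. apply H.
      apply filter_In; split; auto; apply Bool.negb_true_iff, Nat.eqb_neq; auto. }
    split; intros Hz z; [rewrite <- (IHf _ _ (Hu z)) | rewrite (IHf _ _ (Hu z))]; auto.
Qed.

Lemma fv_ex_block ys f w : In w (free_vars (ex_block ys f)) -> In w (free_vars f) /\ ~ In w ys.
Proof.
  induction ys as [|y ys IH]; simpl; intros H; [tauto|].
  apply filter_In in H as [H1 H2]. apply IH in H1 as [H3 H4].
  apply Bool.negb_true_iff, Nat.eqb_neq in H2. split; auto. intros [->|]; auto.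
Qed.

Lemma all_block_inst vs f : forall e e', sat e (all_block vs f) ->
  (forall w, ~ In w vs -> e' w = e w) -> sat e' f.
Proof.
  induction vs as [|v vs IH]; simpl; intros e e' H1 H2.
  - rewrite (sat_ext f e' e); auto.
  - apply (IH _ _ (H1 (e' v))). intros w Hw. unfold upd.
    destruct (Nat.eqb_spec w v); subst; auto.
    apply H2. intros [->|]; auto.
Qed.

Lemma all_block_neg vs f : forall e, ~ sat e (all_block vs f) -> exists e', ~ sat e' f.
Proof.
  induction vs as [|v vs IH]; simpl; intros e H; eauto.
  apply not_all_ex_not in H as [z Hz]. eauto.
Qed.

Definition R (N M a b : Z) := (M | a - b) /\ (a = b \/ (N < a /\ N < b)).

Definition csum (t : lterm) := fold_right (fun p acc => fst p + acc) 0 t.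

Lemma eval_mon_aux t v : (forall w, In w (map snd t) -> w = v) ->
  forall e, eval_lterm e t = csum t * e v.
Proof.
  induction t as [|[a w] t IH]; simpl; intros H e; [lia|].
  rewrite (H w) by auto. rewrite IH by auto. lia.
Qed.

Lemma eval_mon t : (forall v w, In v (map snd t) -> In w (map snd t) -> v = w) ->
  exists v, forall e, eval_lterm e t = csum t * e v.
Proof.
  destruct t as [|[a v] t]; intros H.
  - exists 0%nat; simpl; intros; lia.
  - exists v. apply eval_mon_aux. intros w Hw. apply H; simpl; auto.
Qed.

Lemma R_mono N M N' M' a b : N <= N' -> (M | M') -> R N' M' a b -> R N M a b.
Proof.
  unfold R; intros H1 H2 [H3 H4]; split.
  - eapply Z.divide_trans; eauto.
  - lia.
Qed.

Lemma monadic_inv g : monadic g -> exists N M, 0 < M /\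
  forall e1 e2, (forall w, R N M (e1 w) (e2 w)) -> (sat e1 g <-> sat e2 g).
Proof.
  induction g; simpl; intros Hm.
  - destruct a as [t b | t b m]; simpl in *; unfold monadic_atom in Hm; simpl in Hm;
      destruct (eval_mon t Hm) as [v Hv].
    + exists (Z.abs b), 1. split; [lia|]. intros e1 e2 HR.
      rewrite !Hv. destruct (HR v) as [_ [Heq|[Ha Hb]]]; [rewrite Heq; tauto|].
      destruct (Z.lt_trichotomy (csum t) 0) as [Hc|[Hc|Hc]].
      * split; intros; nia.
      * rewrite Hc; simpl; tauto.
      * split; intros; nia.
    + destruct (Z.eq_dec m 0) as [Hm0|Hm0].
      * subst m. exists (Z.abs b), 1. split; [lia|]. intros e1 e2 HR.
        rewrite !Hv. destruct (HR v) as [_ [Heq|[Ha Hb]]]; [rewrite Heq; tauto|].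
        destruct (Z.eq_dec (csum t) 0) as [Hc|Hc].
        -- rewrite Hc; simpl; tauto.
        -- split; intros Hd; apply Z.divide_0_l in Hd; nia.
      * exists 0, (Z.abs m). split; [lia|]. intros e1 e2 HR.
        rewrite !Hv. destruct (HR v) as [Hd _].
        apply (proj1 (Z.divide_abs_l m _)) in Hd.
        assert (Hd2 : (m | csum t * e1 v - csum t * e2 v)).
        { replace (csum t * e1 v - csum t * e2 v) with (csum t * (e1 v - e2 v)) by ring.
          apply Z.divide_mul_r. exact Hd. }
        split; intros H.
        -- replace (csum t * e2 v - b) with ((csum t * e1 v - b) - (csum t * e1 v - csum t * e2 v)) by ring.
           apply Z.divide_sub_r; auto.
        -- replace (csum t * e1 v - b) with ((csum t * e2 v - b) + (csum t * e1 v - csum t * e2 v)) by ring.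
           apply Z.divide_add_r; auto.
  - destruct (IHg Hm) as [N [M [HM H]]]. exists N, M. split; auto.
    intros e1 e2 HR. rewrite (H e1 e2 HR). tauto.
  - destruct Hm as [Hm1 Hm2].
    destruct (IHg1 Hm1) as [N1 [M1 [HM1 H1]]]. destruct (IHg2 Hm2) as [N2 [M2 [HM2 H2]]].
    exists (Z.max N1 N2), (M1 * M2). split; [nia|]. intros e1 e2 HR.
    assert (HA : forall w, R N1 M1 (e1 w) (e2 w)).
    { intros w; eapply R_mono; [| |apply HR]; [lia|apply Z.divide_factor_l]. }
    assert (HB : forall w, R N2 M2 (e1 w) (e2 w)).
    { intros w; eapply R_mono; [| |apply HR]; [lia|apply Z.divide_factor_r]. }
    rewrite (H1 e1 e2 HA), (H2 e1 e2 HB). tauto.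
  - destruct Hm as [Hm1 Hm2].
    destruct (IHg1 Hm1) as [N1 [M1 [HM1 H1]]]. destruct (IHg2 Hm2) as [N2 [M2 [HM2 H2]]].
    exists (Z.max N1 N2), (M1 * M2). split; [nia|]. intros e1 e2 HR.
    assert (HA : forall w, R N1 M1 (e1 w) (e2 w)).
    { intros w; eapply R_mono; [| |apply HR]; [lia|apply Z.divide_factor_l]. }
    assert (HB : forall w, R N2 M2 (e1 w) (e2 w)).
    { intros w; eapply R_mono; [| |apply HR]; [lia|apply Z.divide_factor_r]. }
    rewrite (H1 e1 e2 HA), (H2 e1 e2 HB). tauto.
  - destruct (IHg Hm) as [N [M [HM H]]]. exists N, M. split; auto.
    intros e1 e2 HR.
    assert (Hu : forall z w, R N M (upd e1 v z w) (upd e2 v z w)).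
    { intros z w; unfold upd; destruct (Nat.eqb w v); auto.
      split; [rewrite Z.sub_diag; apply Z.divide_0_r | auto]. }
    split; intros [z Hz]; exists z; [rewrite <- (H _ _ (Hu z)) | rewrite (H _ _ (Hu z))]; auto.
  - destruct (IHg Hm) as [N [M [HM H]]]. exists N, M. split; auto.
    intros e1 e2 HR.
    assert (Hu : forall z w, R N M (upd e1 v z w) (upd e2 v z w)).
    { intros z w; unfold upd; destruct (Nat.eqb w v); auto.
      split; [rewrite Z.sub_diag; apply Z.divide_0_r | auto]. }
    split; intros Hz z; [rewrite <- (H _ _ (Hu z)) | rewrite (H _ _ (Hu z))]; auto.
Qed.

Theorem mainTheorem13 (n m : nat) (psi : formula) :
  qfree psi ->
  (forall v, In v (free_vars psi) -> (v < n + m)%nat) ->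
  (monadically_decomposable (kappa n m psi) <->
   sat (fun _ => 0%Z) (phi_sentence n m psi)).
Proof.
  intros _ Hfv. split.
  - intros [g [Hg Heq]]. apply NNPP. intros Hphi.
    apply all_block_neg in Hphi as [e Hne].
    destruct (monadic_inv g Hg) as [N [M [HM Hinv]]].
    set (K := N + 1).
    set (e1 := upd (upd e (n + m)%nat K) (n + m + 1)%nat K).
    set (e2 := upd (upd e (n + m)%nat K) (n + m + 1)%nat (K + M)).
    assert (H1 : sat e1 (kappa n m psi)).
    { right. unfold e1, upd; clearbody K; cbn [sat sat_atom eq_formula eval_lterm fold_right fst snd].
      rewrite Nat.eqb_refl. replace (Nat.eqb (n+m) (n+m+1)) with false
        by (symmetry; apply Nat.eqb_neq; lia).
      replace (Nat.eqb (n+m+1) (n+m+1)) with true by (symmetry; apply Nat.eqb_eq; lia).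
      lia. }
    assert (H2 : ~ sat e2 (kappa n m psi)).
    { intros [H|H].
      - apply Hne. revert H. apply sat_ext. intros w Hw.
        apply fv_ex_block in Hw as [Hw _]. apply Hfv in Hw.
        unfold e2, upd. replace (Nat.eqb w (n+m+1)) with false
          by (symmetry; apply Nat.eqb_neq; lia).
        replace (Nat.eqb w (n+m)) with false by (symmetry; apply Nat.eqb_neq; lia).
        auto.
      - unfold e2, upd in H; clearbody K; cbn [sat sat_atom eq_formula eval_lterm fold_right fst snd] in H.
        rewrite Nat.eqb_refl in H. replace (Nat.eqb (n+m) (n+m+1)) with false in H
          by (symmetry; apply Nat.eqb_neq; lia).
        replace (Nat.eqb (n+m+1) (n+m+1)) with true in H by (symmetry; apply Nat.eqb_eq; lia).
        lia. }
    assert (HR : forall w, R N M (e1 w) (e2 w)).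
    { intros w. unfold e1, e2, upd.
      destruct (Nat.eqb w (n+m+1)).
      + split. replace (K - (K + M)) with (-M) by ring. apply Z.divide_opp_r, Z.divide_refl.
        right; unfold K; lia.
      + split; [rewrite Z.sub_diag; apply Z.divide_0_r | auto]. }
    apply H2. apply Heq. apply (proj1 (Hinv e1 e2 HR)). apply Heq. exact H1.
  - intros Hphi. exists (FAtom (ALe [] 0)). split.
    + simpl. unfold monadic_atom. simpl. tauto.
    + intros env. simpl. split; [intros; lia|]. intros _. left.
      unfold phi_sentence in Hphi.
      set (e' := fun w => if (w <? n)%nat then env w else 0).
      assert (H := all_block_inst _ _ _ e' Hphi).
      assert (H' : sat e' (ex_block (yvars n m) psi)).
      { apply H. intros w Hw. unfold e'. destruct (Nat.ltb_spec w n); auto.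
        exfalso; apply Hw. unfold xvars. apply in_seq. lia. }
      revert H'. apply sat_ext. intros w Hw.
      apply fv_ex_block in Hw as [Hw1 Hw2]. apply Hfv in Hw1.
      unfold e'. destruct (Nat.ltb_spec w n); auto.
      exfalso; apply Hw2. unfold yvars. apply in_seq. lia.
Qed.
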